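(* Consider the resilient constrained consensus algorithm described in the context, with at most $f$ Byzantine agents. Suppose $\bigcap_{i\in\mathcal H}\mathcal X_i=\{x^*\}$ and the set of normal agents $\mathcal H$ is $k$-redundant. Suppose $\mu>0$ is such that for every $x\in\mathbb R^m$ and every $\mathcal S\subseteq\mathcal H$ with $|\mathcal S|\ge n-k$, $$\max_{i\in\mathcal S}\mathrm{dist}(x,\mathcal X_i)\ge\mu\,\mathrm{dist}\Big(x,\bigcap_{i\in\mathcal S}\mathcal X_i\Big).$$ If $k>\frac{4f}{\mu^2}+(2f-1)$, then at every time $t$ $$\sum_{i\in\mathcal H}\phi_i(t)\ge\Big(\frac{\mu^2}{2}k-\frac{4f+2f\mu^2-\mu^2}{2}\Big)V(t).$$
   Context: Setting: There are $n$ agents $\mathcal N=\{1,\dots,n\}$ on a complete communication graph. A known integer $f\ge0$ is given. The agents are partitioned into normal agents $\mathcal H$ and Byzantine agents $\mathcal F$ with $|\mathcal F|\le f$. Each $i\in\mathcal H$ has a closed convex $\mathcal X_i\subseteq\mathbb R^m$. Each normal agent's state is constrained to lie in $\mathcal X_i$; in particular $x_i(0)\in\mathcal X_i$. Algorithm: normal agent $i$ has state $x_i(t)\in\mathbb R^m$ and at time $t$ receives $x_{ji}(t)$ from each $j\ne i$. If $j\in\mathcal H$, then $x_{ji}(t)=x_j(t)$. If $j\in\mathcal F$, the value is arbitrary and may differ per recipient. Agent $i$ discards the $f$ received vectors with largest $\|x_i(t)-x_{ji}(t)\|$, with ties broken arbitrarily. The remaining $n-f-1$ senders form $\mathcal M_i(t)$.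 The update is $$x_i(t+1)=\mathrm P_{\mathcal X_i}\Big[x_i(t)+\alpha\sum_{j\in\mathcal M_i(t)}(x_{ji}(t)-x_i(t))\Big],$$ with $\alpha>0$ and $\mathrm P_{\mathcal C}$ the Euclidean projection. Notation: - $\mathrm{dist}(x,\mathcal C)=\|x-\mathrm P_{\mathcal C}[x]\|$; - $\phi_i(t)=\big\langle x_i(t)-x^*,\sum_{j\in\mathcal M_i(t)}(x_i(t)-x_{ji}(t))\big\rangle$; - $V(t)=\sum_{i\in\mathcal H}\|x_i(t)-x^*\|^2$; - $\mathcal H$ is $k$-redundant if for every $\mathcal S\subseteq\mathcal H$ with $|\mathcal S|\ge n-k$ we have $\bigcap_{i\in\mathcal S}\mathcal X_i=\bigcap_{i\in\mathcal H}\mathcal X_i$. *)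

(* Defs.v *)
From HB Require Import structures.
From mathcomp Require Import all_boot all_order all_algebra.
From mathcomp Require Import all_classical all_reals all_analysis.
Set Implicit Arguments. Unset Strict Implicit. Unset Printing Implicit Defensive.
Import Order.TTheory GRing.Theory Num.Theory.
Import numFieldNormedType.Exports.
Local Open Scope classical_set_scope.
Local Open Scope ring_scope.

Section Defs.
Variables (R : realType) (m : nat).
Local Notation vec := 'rV[R]_m.

Definition dotv (u v : vec) : R := \sum_(k < m) u ord0 k * v ord0 k.
Definition enorm (u : vec) : R := Num.sqrt (dotv u u).

Definition is_convex (C : set vec) : Prop :=
  forall x y, C x -> C y -> forall l : R, 0 <= l <= 1 ->
    C (l *: x + (1 - l) *: y).

Definition is_proj (C : set vec) (x p : vec) : Prop :=
  C p /\ forall y, C y -> enorm (x - p) <= enorm (x - y).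

Definition dist (x : vec) (C : set vec) : R := inf [set enorm (x - y) | y in C].

Definition bigcapS (n : nat) (X : 'I_n -> set vec) (S : {set 'I_n}) : set vec :=
  [set y | forall i, i \in S -> X i y].

Definition k_redundant (n k : nat) (X : 'I_n -> set vec) (H : {set 'I_n}) : Prop :=
  forall S : {set 'I_n}, S \subset H -> (n - k <= #|S|)%N ->
    bigcapS X S = bigcapS X H.

(* Trimming rule of normal agent i at a given time: M is the set of remaining
   senders after discarding the f received vectors (among those from j <> i)
   farthest from x_i, ties broken arbitrarily. msg j = x_{ji}. *)
Definition trimmed (n f : nat) (i : 'I_n) (xi : vec) (msg : 'I_n -> vec)
    (M : {set 'I_n}) : Prop :=
  M \subset [set j | j != i] /\ #|M| = (n - f - 1)%N /\
  forall j j', j \in M -> j' != i -> j' \notin M ->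
    enorm (xi - msg j) <= enorm (xi - msg j').

Definition phi (n : nat) (xstar xi : vec) (msg : 'I_n -> vec) (M : {set 'I_n}) : R :=
  dotv (xi - xstar) (\sum_(j in M) (xi - msg j)).

Definition Vfun (n : nat) (H : {set 'I_n}) (xstar : vec) (x : 'I_n -> vec) : R :=
  \sum_(i in H) enorm (x i - xstar) ^+ 2.

End Defs.

(* Main.v *)
Require Import Defs.
From HB Require Import structures.
From mathcomp Require Import all_boot all_order all_algebra.
From mathcomp Require Import all_classical all_reals all_analysis.
From mathcomp Require Import ring lra zify.
Import Order.TTheory GRing.Theory Num.Theory.
Import numFieldNormedType.Exports.
Local Open Scope classical_set_scope.
Local Open Scope ring_scope.

Section H.
Variables (R : realType) (m : nat).
Local Notation vec := 'rV[R]_m.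

Lemma dotvC (u v : vec) : dotv u v = dotv v u.
Proof. by apply: eq_bigr => k _; rewrite mulrC. Qed.

Lemma dotvDr (u v w : vec) : dotv u (v + w) = dotv u v + dotv u w.
Proof. by rewrite /dotv -big_split; apply: eq_bigr => k _; rewrite mxE mulrDr. Qed.

Lemma dotvNr (u v : vec) : dotv u (- v) = - dotv u v.
Proof. by rewrite /dotv -sumrN; apply: eq_bigr => k _; rewrite mxE mulrN. Qed.

Lemma dotvBr (u v w : vec) : dotv u (v - w) = dotv u v - dotv u w.
Proof. by rewrite dotvDr dotvNr. Qed.

Lemma dotvBl (u v w : vec) : dotv (v - w) u = dotv v u - dotv w u.
Proof. by rewrite dotvC dotvBr !(dotvC u). Qed.

Lemma dotvDl (u v w : vec) : dotv (v + w) u = dotv v u + dotv w u.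
Proof. by rewrite dotvC dotvDr !(dotvC u). Qed.

Lemma dotv0r (u : vec) : dotv u 0 = 0.
Proof. by rewrite /dotv big1 // => k _; rewrite mxE mulr0. Qed.

Lemma dotv_sumr (u : vec) (I : finType) (P : pred I) (F : I -> vec) :
  dotv u (\sum_(j | P j) F j) = \sum_(j | P j) dotv u (F j).
Proof.
rewrite /dotv; under eq_bigr => k _ do rewrite summxE mulr_sumr.
by rewrite exchange_big.
Qed.

Lemma dotv_ge0 (u : vec) : 0 <= dotv u u.
Proof. by apply: sumr_ge0 => k _; rewrite -expr2 sqr_ge0. Qed.

Lemma enorm_sq (u : vec) : enorm u ^+ 2 = dotv u u.
Proof. by rewrite /enorm sqr_sqrtr // dotv_ge0. Qed.

Lemma enorm_ge0 (u : vec) : 0 <= enorm u.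
Proof. exact: sqrtr_ge0. Qed.

Lemma enorm_le (u v : vec) : enorm u <= enorm v -> dotv u u <= dotv v v.
Proof. by rewrite /enorm ler_sqrt // dotv_ge0. Qed.

Lemma neg_dot_le (a v : vec) : - dotv a v <= dotv a a + dotv v v / 4.
Proof.
have := dotv_ge0 (a + a + v).
rewrite !dotvDl !dotvDr (dotvC v a); lra.
Qed.

Lemma pos_dot_le (a v : vec) : dotv a v <= dotv a a + dotv v v / 4.
Proof.
have := dotv_ge0 (a + a - v).
rewrite !dotvBl !dotvBr !dotvDl !dotvDr (dotvC v a); lra.
Qed.

Lemma dist_le (y z : vec) (C : set vec) : C z -> dist y C <= enorm (y - z).
Proof.
move=> Cz; rewrite /dist; apply: ge_inf; last by exists z.
by exists 0 => r [w _ <-]; exact: enorm_ge0.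
Qed.

Lemma dist1 (y z : vec) : dist y [set z] = enorm (y - z).
Proof. by rewrite /dist image_set1 inf1. Qed.

Lemma sum_le_min (I : finType) (B D : {set I}) (g h : I -> R) :
  (#|B| <= #|D|)%N -> (forall j, j \in D -> 0 <= h j) ->
  (forall j j', j \in B -> j' \in D -> g j <= h j') ->
  \sum_(j in B) g j <= \sum_(j in D) h j.
Proof.
move=> cBD h0 gh; case: (set_0Vmem D) => [D0 | [j0 Dj0]].
  move: cBD; rewrite D0 cards0 leqn0 cards_eq0 => /eqP ->.
  by rewrite !big_set0.
case: (@arg_minP _ R I j0 (mem D) h Dj0) => jm Djm jmin.
apply: (@le_trans _ _ (\sum_(j in B) h jm)).
  by apply: ler_sum => j Bj; apply: gh.
apply: (@le_trans _ _ (\sum_(j in D) h jm)); last first.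
  by apply: ler_sum => j Dj; apply: jmin.
rewrite !sumr_const -(mulr_natl (h jm) #|B|) -(mulr_natl (h jm) #|D|); apply: ler_wpM2r; first exact: h0.
by rewrite ler_nat.
Qed.

Lemma bigmax_lt (I : finType) (S : {set I}) (F : I -> R) (c : R) :
  0 < c -> (forall j, j \in S -> F j < c) -> \big[Num.max/0]_(j in S) F j < c.
Proof.
move=> c0 Fc; apply: (big_ind (fun v => v < c)) => //.
by move=> u v uc vc; rewrite /Num.max gt_max uc vc.
Qed.

End H.

Theorem lemma3 (R : realType) (m n f k : nat) (alpha mu : R)
  (H : {set 'I_n}) (X : 'I_n -> set 'rV[R]_m) (xstar : 'rV[R]_m)
  (x : nat -> 'I_n -> 'rV[R]_m)
  (msg : nat -> 'I_n -> 'I_n -> 'rV[R]_m)   (* msg t j i = x_{ji}(t) *)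
  (M : nat -> 'I_n -> {set 'I_n}) :
  (f < n)%N ->
  (#|~: H| <= f)%N ->
  (forall i, i \in H -> closed (X i) /\ is_convex (X i)) ->
  0 < alpha ->
  (forall t i j, i \in H -> j \in H -> j != i -> msg t j i = x t j) ->
  (forall t i, i \in H -> trimmed f i (x t i) (fun j => msg t j i) (M t i)) ->
  (forall i, i \in H -> X i (x 0%N i)) ->
  (forall t i, i \in H ->
     is_proj (X i)
       (x t i + alpha *: \sum_(j in M t i) (msg t j i - x t i))
       (x t.+1 i)) ->
  bigcapS X H = [set xstar] ->
  k_redundant k X H ->
  0 < mu ->
  (forall (y : 'rV[R]_m) (S : {set 'I_n}), S \subset H -> (n - k <= #|S|)%N ->
     \big[Num.max/0]_(i in S) dist y (X i) >= mu * dist y (bigcapS X S)) ->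
  (k%:R > 4 * f%:R / mu ^+ 2 + (2 * f%:R - 1)) ->
  forall t,
    \sum_(i in H) phi xstar (x t i) (fun j => msg t j i) (M t i) >=
    (mu ^+ 2 / 2 * k%:R - (4 * f%:R + 2 * f%:R * mu ^+ 2 - mu ^+ 2) / 2)
      * Vfun H xstar (x t).
Proof.
move=> fn cardH Hconv alpha_gt0 msgH trim X0 proj capH kred mu_gt0 mucond kbig t.
have inX : forall s j, j \in H -> X j (x s j).
  elim=> [|s IH] j jH; first exact: X0.
  by have [] := proj s j jH.
pose a i := x t i - xstar.
pose d i j := x t i - x t j.
have dE : forall i j, d i j = a i - a j.
  by move=> i j; rewrite /d /a opprB addrA subrK.
set c := (mu ^+ 2 / 2 * k%:R - _ / 2).
have glob : \sum_(i in H) \sum_(j in H) dotv (a i) (d i j) =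
            \sum_(i in H) \sum_(j in H) dotv (d i j) (d i j) / 2.
  have e1 : forall i j, dotv (d i j) (d i j) = dotv (a i) (d i j) + dotv (a j) (d j i).
    move=> i j; rewrite {1}dE dotvBl.
    by rewrite /d -(opprB (x t i)) dotvNr.
  under [RHS]eq_bigr => i _ do rewrite -mulr_suml.
  rewrite -mulr_suml.
  under [in RHS]eq_bigr => i _ do under eq_bigr => j _ do rewrite e1.
  under [in RHS]eq_bigr => i _ do rewrite big_split.
  rewrite big_split /= [X in _ + X]exchange_big /=.
  by field.
have key : forall i, i \in H ->
  c * dotv (a i) (a i) <= phi xstar (x t i) (fun j => msg t j i) (M t i)
     - \sum_(j in H) dotv (a i) (d i j) + \sum_(j in H) dotv (d i j) (d i j) / 2.
  move=> i iH.
  have [Msub [cardM trimc]] := trim t i iH.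
  set Mi := M t i in Msub cardM trimc *.
  pose HM := H :&: Mi; pose Dm := (H :\: Mi) :\ i; pose B := Mi :\: H.
  have iM : i \notin Mi.
    apply/negP => /(fintype.subsetP Msub). by rewrite in_setE /= eqxx.
  have c1 : (#|HM| + #|H :\: Mi| = #|H|)%N by rewrite cardsID.
  have c2 : #|H :\: Mi| = #|Dm|.+1 by rewrite (cardsD1 i) !inE iM iH.
  have c3 : (#|HM| + #|B| = #|Mi|)%N by rewrite /HM finset.setIC cardsID.
  have c4 : (#|B| <= #|~: H|)%N.
    by apply: subset_leq_card; apply/fintype.subsetP => j; rewrite !inE => /andP[].
  have c5 : (#|H| + #|~: H| = n)%N by rewrite cardsC card_ord.
  have cB : (#|B| <= #|Dm|)%N by lia.
  have cD : (#|Dm| <= f)%N by lia.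
  set aa := dotv (a i) (a i).
  have aa0 : 0 <= aa by exact: dotv_ge0.
  have ph : phi xstar (x t i) (fun j => msg t j i) Mi =
      \sum_(j in HM) dotv (a i) (d i j) + \sum_(j in B) dotv (a i) (x t i - msg t j i).
    rewrite /phi dotv_sumr (big_setID H) /= /HM finset.setIC; congr (_ + _).
    apply: eq_bigr => j; rewrite !inE => /andP[jH jM].
    have := fintype.subsetP Msub j jM; rewrite in_setE /= => ji.
    by rewrite msgH.
  have sH : forall F : 'I_n -> R,
      \sum_(j in H) F j = \sum_(j in HM) F j + (F i + \sum_(j in Dm) F j).
    move=> F; rewrite (big_setID Mi) /= [X in _ + X](big_setD1 i) // !inE iM iH //.
  have dii : d i i = 0 by rewrite /d subrr.
  rewrite ph (sH (fun j => dotv (a i) (d i j))) (sH (fun j => dotv (d i j) (d i j) / 2)) /=.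
  rewrite dii !dotv0r.
  have b1 : \sum_(j in Dm) dotv (a i) (d i j) <=
            \sum_(j in Dm) (aa + dotv (d i j) (d i j) / 4).
    by apply: ler_sum => j _; exact: pos_dot_le.
  have b2 : \sum_(j in B) - dotv (a i) (x t i - msg t j i) <=
            \sum_(j in Dm) (aa + dotv (d i j) (d i j) / 4).
    apply: sum_le_min => //.
      move=> j _; apply: addr_ge0 => //; apply: divr_ge0 => //; exact: dotv_ge0.
    move=> j j'; rewrite !inE => /andP[jH jM] /and3P[j'i j'M j'H].
    have h1 := @neg_dot_le _ _ (a i) (x t i - msg t j i).
    apply: (le_trans h1). rewrite lerD2l.
    apply: ler_wpM2r; first by rewrite invr_ge0.
    have := trimc j j' jM j'i j'M => /=; rewrite (msgH t i j') // => /enorm_le.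
    by rewrite /d.
  have sc : \sum_(j in Dm) (aa + dotv (d i j) (d i j) / 4) =
            aa *+ #|Dm| + (\sum_(j in Dm) dotv (d i j) (d i j)) / 4.
    by rewrite big_split sumr_const mulr_suml.
  have b3 : aa *+ #|Dm| <= f%:R * aa.
    by rewrite -(mulr_natl aa #|Dm|); apply: ler_wpM2r => //; rewrite ler_nat.
  have b4 : (k%:R + 1 - 2 * f%:R) * (mu ^+ 2 * aa) <= \sum_(j in HM) dotv (d i j) (d i j).
    case: (eqVneq aa 0) => [-> | aan0].
      rewrite !mulr0; apply: sumr_ge0 => j _; exact: dotv_ge0.
    have aapos : 0 < aa by rewrite lt0r aan0 aa0.
    have maa : 0 < mu ^+ 2 * aa by rewrite mulr_gt0 // exprn_gt0.
    pose Bc := finset (fun j => mu ^+ 2 * aa <= dotv (d i j) (d i j)).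
    pose Ls := H :&: Bc. pose Ss := H :\: Bc.
    have cLS : (#|Ls| + #|Ss| = #|H|)%N by rewrite cardsID.
    have cS : (#|Ss| < n - k)%N.
      rewrite ltnNge; apply/negP => hS.
      have sS : Ss \subset H by apply: subsetDl.
      have := mucond (x t i) Ss sS hS.
      rewrite (kred Ss sS hS) capH dist1.
      apply/negP; rewrite -ltNge.
      have en : enorm (x t i - xstar) = Num.sqrt aa by [].
      rewrite en; apply: bigmax_lt.
        by rewrite mulr_gt0 // sqrtr_gt0.
      move=> j; rewrite !inE => /andP[jnB jH].
      have h2 := @dist_le _ _ (x t i) _ _ (inX t j jH).
      apply: (le_lt_trans h2).
      rewrite -ltNge in jnB.
      have := jnB; rewrite -ltr_sqrt // sqrtrM; last by rewrite sqr_ge0.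
      by rewrite sqrtr_sqr gtr0_norm.
    have cL : (#|Ls :&: Mi| + #|Ls :\: Mi| = #|Ls|)%N by rewrite cardsID.
    have cL1 : (#|Ls :\: Mi| <= #|Dm|)%N.
      apply: subset_leq_card; apply/fintype.subsetP => j.
      rewrite !inE => /and3P[jM jH jB]; rewrite jM jH !andbT.
      apply/eqP => ji; move: jB; rewrite ji dii dotv0r.
      by rewrite leNgt maa.
    have cL2 : (#|Ls :&: Mi| <= #|HM :&: Bc|)%N.
      apply: subset_leq_card; apply/fintype.subsetP => j.
      by rewrite !inE => /andP[/andP[-> ->] ->].
    have cN : (k + 1 <= #|HM :&: Bc| + 2 * f)%N by lia.
    apply: (@le_trans _ _ (\sum_(j in HM :&: Bc) dotv (d i j) (d i j))); last first.
      rewrite [X in _ <= X](big_setID Bc) /= lerDl.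
      by apply: sumr_ge0 => j _; exact: dotv_ge0.
    apply: (@le_trans _ _ (\sum_(j in HM :&: Bc) (mu ^+ 2 * aa))); last first.
      by apply: ler_sum => j; rewrite !inE => /andP[].
    rewrite sumr_const -(mulr_natl (mu ^+ 2 * aa)).
    apply: ler_wpM2r; first exact: ltW.
    have : ((k + 1)%N%:R <= (#|HM :&: Bc| + (f + f))%N%:R :> R) by rewrite ler_nat; lia.
    rewrite !natrD; lra.
  have ce : c * aa = (k%:R + 1 - 2 * f%:R) * (mu ^+ 2 * aa) / 2 - 2 * (f%:R * aa).
    by rewrite /c; field.
  rewrite ce -!mulr_suml; rewrite sumrN in b2; rewrite sc in b1 b2.
  move: b1 b2 b3 b4.
  set s1 := \sum_(j in HM) dotv (a i) (d i j).
  set s2 := \sum_(j in B) dotv (a i) (x t i - msg t j i).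
  set s3 := \sum_(j in Dm) dotv (a i) (d i j).
  set s4 := \sum_(j in HM) dotv (d i j) (d i j).
  set s5 := \sum_(j in Dm) dotv (d i j) (d i j).
  set A := aa *+ #|Dm|.
  set K := (k%:R + 1 - 2 * f%:R) * (mu ^+ 2 * aa).
  set P := f%:R * aa.
  move=> b1 b2 b3 b4.
  lra.
rewrite /Vfun.
under eq_bigr => i _ do rewrite enorm_sq.
rewrite mulr_sumr.
apply: (@le_trans _ _ (\sum_(i in H) (phi xstar (x t i) (fun j => msg t j i) (M t i)
     - \sum_(j in H) dotv (a i) (d i j) + \sum_(j in H) dotv (d i j) (d i j) / 2))).
  by apply: ler_sum => i iH; apply: key.
rewrite big_split big_split /= sumrN glob.
lra.
Qed.
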